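(* There is an absolute constant $c>0$ such that for every $\ell\ge 2$, every deterministic online algorithm for the soft allocation problem in dimension $\ell$ with all weights equal to $1$ has competitive ratio at least $c\,\ell$. That is, the competitive ratio of soft allocation is $\Omega(\ell)$.
   Context: Soft allocation problem in dimension $\ell$ with weights $w\in(0,\infty)^\ell$: an algorithm maintains $x(t)\in\Delta^{\ell-1}=\{x\in[0,1]^\ell:\sum_i x_i=1\}$ starting from some $x(0)$. At each time $t=1,2,\dots$ a direction $r_t\in\{1,\dots,\ell\}$ and a non-increasing function $f_t:[0,1]\to\mathbb{R}_{\ge0}\cup\{\infty\}$ are revealed; the algorithm moves from $x(t-1)$ to $x(t)$ knowing only data revealed so far, paying $\sum_i w_i|x_i(t)-x_i(t-1)|+f_t(x_{r_t}(t))$. An online algorithm is $\rho$-competitive if there is $b$ independent of the request sequence such that its total cost is at most $\rho\cdot\mathrm{OPT}+b$ on every sequence, where $\mathrm{OPT}$ is the optimal offline total cost. *)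

(* Defs.v *)
From mathcomp Require Import all_boot all_order all_algebra.
From mathcomp Require Import all_classical all_reals.
From mathcomp Require Import ereal.
Set Implicit Arguments. Unset Strict Implicit. Unset Printing Implicit Defensive.
Import Order.TTheory GRing.Theory Num.Theory.
Local Open Scope classical_set_scope.
Local Open Scope ring_scope.

Section SoftAllocation.
Variables (R : realType) (l : nat).

Definition point := 'I_l -> R.

Definition in_simplex (x : point) : Prop :=
  (forall i, 0 <= x i <= 1) /\ \sum_(i < l) x i = 1.

(* A request: a direction r_t and a cost function f_t (extended-real valued,
   only its values on [0,1] matter). *)
Definition request := ('I_l * (R -> \bar R))%type.

Definition valid_fun (f : R -> \bar R) : Prop :=
  (forall a, 0 <= a <= 1 -> (0 <= f a)%E) /\
  (forall a b, 0 <= a -> a <= b -> b <= 1 -> (f b <= f a)%E).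

Definition valid_seq (s : seq request) : Prop :=
  forall rq, rq \in s -> valid_fun rq.2.

(* Total cost of a trajectory y (y 0 = starting point, y t = position after
   serving the t-th request) on request sequence s, with weights w. *)
Definition traj_cost (w : 'I_l -> R) (y : nat -> point) (s : seq request)
  : \bar R :=
  (\sum_(p <- zip (iota 0 (size s)) s)
     ((\sum_(i < l) w i * `|y p.1.+1 i - y p.1 i|)%:E
      + p.2.2 (y p.1.+1 p.2.1)))%E.

Definition OPT (w : 'I_l -> R) (x0 : point) (s : seq request) : \bar R :=
  ereal_inf [set traj_cost w y s | y in
               [set y : nat -> point | y 0%N = x0 /\ forall t, in_simplex (y t)]].

(* A deterministic online algorithm: its position after the first t requests
   is a function of those t requests only; A [::] is the starting point x(0). *)
Definition online_alg := seq request -> point.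

Definition alg_valid (A : online_alg) : Prop :=
  forall s, valid_seq s -> in_simplex (A s).

Definition alg_traj (A : online_alg) (s : seq request) : nat -> point :=
  fun t => A (take t s).

Definition alg_cost (w : 'I_l -> R) (A : online_alg) (s : seq request)
  : \bar R := traj_cost w (alg_traj A s) s.

Definition competitive (w : 'I_l -> R) (A : online_alg) (rho : R) : Prop :=
  exists b : R, forall s, valid_seq s ->
    (alg_cost w A s <= rho%:E * OPT w (A [::]) s + b%:E)%E.

End SoftAllocation.

(* Main.v *)
Require Import Defs.
From mathcomp Require Import all_boot all_order all_algebra.
From mathcomp Require Import all_classical all_reals.
From mathcomp Require Import ereal.
From mathcomp Require Import lra.
Import Order.TTheory GRing.Theory Num.Theory.
Local Open Scope ring_scope.
Lemma zip_ge (R : realType) (T : Type) (q0 : T) (F : nat * T -> R) (e : R) (s : seq T) m :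
  (forall t, (t < size s)%N -> e <= F ((m + t)%N, nth q0 s t)) ->
  (size s)%:R * e <= \sum_(p <- zip (iota m (size s)) s) F p.
Proof.
elim: s m => [|x s IH] m H /=; first by rewrite big_nil mul0r.
rewrite big_cons.
have h0 := H 0%N isT; rewrite addn0 /= in h0.
have h1 : (size s)%:R * e <= \sum_(p <- zip (iota m.+1 (size s)) s) F p.
  by apply: IH => t ht; rewrite addSnnS; exact: (H t.+1 ht).
rewrite -natr1; lra.
Qed.
Lemma zip_le (R : realType) (T : Type) (q0 : T) (F : nat * T -> R) (e : R) (s : seq T) m :
  (forall t, (t < size s)%N -> F ((m + t)%N, nth q0 s t) <= e) ->
  \sum_(p <- zip (iota m (size s)) s) F p <= (size s)%:R * e.
Proof.
elim: s m => [|x s IH] m H /=; first by rewrite big_nil mul0r.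
rewrite big_cons.
have h0 := H 0%N isT; rewrite addn0 /= in h0.
have h1 : \sum_(p <- zip (iota m.+1 (size s)) s) F p <= (size s)%:R * e.
  by apply: IH => t ht; rewrite addSnnS; exact: (H t.+1 ht).
rewrite -natr1; lra.
Qed.
Lemma zip_conv (R : realType) (T : eqType) (F : nat * T -> \bar R) (G : nat * T -> R) (s : seq T) m :
  (forall t q, q \in s -> F (t, q) = (G (t, q))%:E) ->
  (\sum_(p <- zip (iota m (size s)) s) F p = (\sum_(p <- zip (iota m (size s)) s) G p)%:E)%E.
Proof.
elim: s m => [|x s IH] m H /=; first by rewrite !big_nil.
rewrite !big_cons EFinD H ?mem_head // IH // => t q hq.
by apply: H; rewrite inE hq orbT.
Qed.

Section Adv.
Variables (R : realType) (l : nat) (A : online_alg R l) (i0 : 'I_l).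
Hypothesis hA : alg_valid A.
Hypothesis hl : (2 <= l)%N.

Let L : R := l%:R.
Let a : R := (l.-1)%:R.
Let th : R := a^-1.
Let eps : R := th - L^-1.

Lemma La : L = a + 1.
Proof. by rewrite /L /a natr1 prednK // (leq_trans _ hl). Qed.

Lemma a_ge1 : 1 <= a.
Proof. by rewrite /a ler1n -ltnS prednK // (leq_trans _ hl). Qed.

Lemma eps_gt0 : 0 < eps.
Proof.
rewrite /eps /th La; have ha := a_ge1.
rewrite subr_gt0 ltf_pV2 ?posrE; lra.
Qed.

Lemma th_le1 : th <= 1.
Proof. have := a_ge1 => h; rewrite /th invf_le1 //; lra. Qed.

Lemma th_gt0 : 0 < th.
Proof. rewrite /th invr_gt0; have := a_ge1; lra. Qed.

Definition gf (x : R) : R := if x < th then eps else 0.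
Definition fc (x : R) : \bar R := (gf x)%:E.

Lemma gf_ge0 x : 0 <= gf x.
Proof. rewrite /gf; case: ifP => _ //; exact: ltW eps_gt0. Qed.

Lemma fc_valid : valid_fun fc.
Proof.
split=> [x _|x y _ hxy _]; first by rewrite /fc lee_fin gf_ge0.
rewrite /fc lee_fin /gf; case: (ltP y th) => hy.
  by rewrite (le_lt_trans hxy hy).
by case: ifP => _ //; exact: ltW eps_gt0.
Qed.

Definition dir (s : seq (request R l)) : 'I_l :=
  odflt i0 [pick r | A s r <= L^-1].

Fixpoint adv (n : nat) : seq (request R l) :=
  if n is n'.+1 then rcons (adv n') (dir (adv n'), fc) else [::].

Lemma adv_mem n q : q \in adv n -> q.2 = fc.
Proof.
elim: n => [|n IH] //=; rewrite mem_rcons inE => /orP [/eqP -> //|]; exact: IH.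
Qed.

Lemma adv_valid n : valid_seq (adv n).
Proof. by move=> q /adv_mem ->; exact: fc_valid. Qed.

Lemma size_adv n : size (adv n) = n.
Proof. by elim: n => //= n IH; rewrite size_rcons IH. Qed.

Lemma take_adv n t : (t <= n)%N -> take t (adv n) = adv t.
Proof.
elim: n t => [|n IH] t ht; first by move: ht; rewrite leqn0 => /eqP ->.
rewrite leq_eqVlt in ht; case/orP: ht => [/eqP ->|ht].
  by rewrite take_oversize // size_adv.
by rewrite /= -cats1 takel_cat ?size_adv // IH.
Qed.

Lemma nth_adv n t q0 : (t < n)%N -> nth q0 (adv n) t = (dir (adv t), fc).
Proof.
move=> ht; rewrite -(nth_take q0 (ltnSn t)) take_adv //= nth_rcons size_adv.
by rewrite ltnn eqxx.
Qed.

Lemma sum_invL : \sum_(i < l) L^-1 = 1.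
Proof.
rewrite sumr_const card_ord -mulr_natl divff // /L pnatr_eq0.
by rewrite -lt0n (leq_trans _ hl).
Qed.

Lemma pick_small s : valid_seq s -> A s (dir s) <= L^-1.
Proof.
move=> vs; rewrite /dir; case: pickP => [r -> //| H] /=.
exfalso; have [hx hs] := hA _ vs.
have hlt : forall i, L^-1 < A s i by move=> i; rewrite ltNge H.
have : \sum_(i < l) L^-1 < \sum_(i < l) A s i.
  rewrite (bigD1 i0) //= [X in _ < X](bigD1 i0) //=.
  apply: ltr_leD; first exact: hlt.
  by apply: ler_sum => i _; exact: ltW.
by rewrite sum_invL hs ltxx.
Qed.

Lemma step_cost t :
  eps <= \sum_(i < l) 1 * `|A (adv t.+1) i - A (adv t) i| + gf (A (adv t.+1) (dir (adv t))).
Proof.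
set x := A (adv t); set x' := A (adv t.+1); set r := dir (adv t).
have hs : 0 <= \sum_(i < l) 1 * `|x' i - x i|.
  by apply: sumr_ge0 => i _; rewrite mul1r.
rewrite /gf; case: ltP => h; first by lra.
have hr : x r <= L^-1 by exact: pick_small (adv_valid t).
have : `|x' r - x r| <= \sum_(i < l) 1 * `|x' i - x i|.
  rewrite (bigD1 r) //= mul1r lerDl; apply: sumr_ge0 => i _; by rewrite mul1r.
have : x' r - x r <= `|x' r - x r| by exact: ler_norm.
rewrite /eps; lra.
Qed.


Let x0 := A [::].

Lemma x0_simplex : in_simplex x0.
Proof. by apply: hA => q; rewrite in_nil. Qed.

Definition sj (j : 'I_l) : ('I_l -> R) := fun i => if i == j then 0 else th.
Definition yj (j : 'I_l) : nat -> ('I_l -> R) := fun t => if t is 0 then x0 else sj j.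

Lemma sum_sj j : \sum_(i < l) sj j i = 1.
Proof.
rewrite (bigD1 j) //= /sj eqxx add0r.
rewrite (eq_bigr (fun=> th)) => [|i /negbTE -> //].
rewrite sumr_const cardC1 card_ord -mulr_natl /th divff //.
have := a_ge1; rewrite /a; lra.
Qed.

Lemma sj_simplex j : in_simplex (sj j).
Proof.
split; last exact: sum_sj.
move=> i; rewrite /sj; case: ifP => _; first by rewrite lexx ler01.
by rewrite (ltW th_gt0) th_le1.
Qed.

Lemma yj_in j : yj j 0 = x0 /\ forall t, in_simplex (yj j t).
Proof. split=> // -[|t] /=; [exact: x0_simplex | exact: sj_simplex]. Qed.

Definition tm (y : nat -> ('I_l -> R)) (p : nat * request R l) : R :=
  \sum_(i < l) 1 * `|y p.1.+1 i - y p.1 i| + gf (y p.1.+1 p.2.1).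

Definition TR (y : nat -> ('I_l -> R)) (s : seq (request R l)) : R :=
  \sum_(p <- zip (iota 0 (size s)) s) tm y p.

Lemma traj_real y n : traj_cost (fun _ => 1%R) y (adv n) = (TR y (adv n))%:E.
Proof.
rewrite /traj_cost /TR; apply: zip_conv => t q hq.
by rewrite /tm /= (adv_mem _ _ hq) /fc EFinD.
Qed.

Lemma tm_ge0 y p : 0 <= tm y p.
Proof.
rewrite /tm; apply: addr_ge0; last exact: gf_ge0.
by apply: sumr_ge0 => i _; rewrite mul1r.
Qed.

Lemma TR_ge0 y s : 0 <= TR y s.
Proof. by apply: sumr_ge0 => p _; exact: tm_ge0. Qed.

Lemma sum_gf r : \sum_(j < l) gf (sj j r) = eps.
Proof.
rewrite (bigD1 r) //= /sj eqxx /gf th_gt0 big1 ?addr0 // => j hj.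
by rewrite eq_sym (negbTE hj) ltxx.
Qed.

Definition G (p : nat * request R l) : R := \sum_(j < l) tm (yj j) p.

Lemma G_succ t q : G (t.+1, q) <= eps.
Proof.
rewrite /G /tm /= -(sum_gf q.1) big_split /= big1 ?add0r // => j _.
by rewrite big1 // => i _; rewrite subrr normr0 mulr0.
Qed.

Lemma G_zero q : G (0, q) <= eps + 2 * L.
Proof.
rewrite /G /tm /= big_split /= sum_gf addrC lerD2l.
have -> : 2 * L = \sum_(j < l) 2.
  by rewrite sumr_const card_ord /L mulr_natr.
apply: ler_sum => j _.
have [hx hx1] := x0_simplex.
have [hs hs1] := sj_simplex j.
have -> : 2 = \sum_(i < l) (sj j i + x0 i) by rewrite big_split /= hs1 hx1.
apply: ler_sum => i _; rewrite mul1r.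
have /andP [h1 _] := hx i; have /andP [h2 _] := hs i.
by rewrite (le_trans (ler_normB _ _)) // !ger0_norm.
Qed.

Lemma TR_sum n : \sum_(j < l) TR (yj j) (adv n.+1) <= n.+1%:R * eps + 2 * L.
Proof.
have -> : \sum_(j < l) TR (yj j) (adv n.+1) =
  \sum_(p <- zip (iota 0 (size (adv n.+1))) (adv n.+1)) G p.
  by rewrite /TR /G exchange_big.
have : (0 < size (adv n.+1))%N by rewrite size_adv.
rewrite -[in X in _ <= X](size_adv n.+1).
move: (adv n.+1) => s; case: s => [|q s'] //= _; rewrite big_cons.
have := zip_le _ _ q G eps s' 1 (fun t _ => G_succ t _).
have := G_zero q.
rewrite -natr1; set X := \sum_(_ <- _) _; lra.
Qed.

Lemma key n : exists alg o : R,
  alg_cost (fun _ => 1%R) A (adv n.+1) = alg%:E /\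
  OPT (fun _ => 1%R) (A [::]) (adv n.+1) = o%:E /\
  n.+1%:R * eps <= alg /\ 0 <= o /\ L * o <= n.+1%:R * eps + 2 * L.
Proof.
exists (TR (alg_traj A (adv n.+1)) (adv n.+1)).
have h0 : (0 <= OPT (fun _ => 1%R) (A [::]) (adv n.+1))%E.
  by apply: le_ereal_inf_tmp => z [y _ <-]; rewrite traj_real lee_fin TR_ge0.
have hj : forall j, (OPT (fun _ => 1%R) (A [::]) (adv n.+1) <= (TR (yj j) (adv n.+1))%:E)%E.
  move=> j; apply: ge_ereal_inf; exists (traj_cost (fun _ => 1%R) (yj j) (adv n.+1)).
    by exists (yj j) => //; exact: yj_in.
  by rewrite traj_real.
case: (OPT _ _ _) h0 hj => [o| |] h0 hj; last by [].
  2: by have := hj i0.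
exists o; split; first by rewrite /alg_cost traj_real.
split=> //; split.
  rewrite -{1}(size_adv n.+1) /TR; apply: (zip_ge _ _ (i0, fc)) => t ht.
  rewrite size_adv in ht.
  rewrite add0n (nth_adv _ _ (i0, fc) ht) /tm /alg_traj.
  rewrite [take (_, _).1.+1 _]take_adv // [take (_, _).1 _]take_adv; last exact: ltnW.
  exact: step_cost.
split; first by rewrite -lee_fin.
apply: le_trans (TR_sum n).
have -> : L * o = \sum_(j < l) o by rewrite sumr_const card_ord -mulr_natl.
by apply: ler_sum => j _; rewrite -lee_fin.
Qed.

End Adv.

Theorem proposition1 (R : realType) :
  exists c : R, 0 < c /\
    forall (l : nat), (2 <= l)%N ->
    forall (A : online_alg R l), alg_valid A ->
    forall rho : R, competitive (fun _ => 1) A rho -> c * l%:R <= rho.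
Proof.
exists 1; split; first exact: ltr01.
move=> l hl A hA rho [b Hb]; rewrite mul1r.
have i0 : 'I_l := Ordinal (leq_trans (isT : (1 <= 2)%N) hl).
rewrite leNgt; apply/negP => Hrho.
have epos := eps_gt0 R l hl.
set eps := l.-1%:R^-1 - l%:R^-1 in epos.
set L := (l%:R : R) in Hrho.
have Lpos : 0 < L by rewrite /L ltr0n (leq_trans _ hl).
have D2pos : 0 < eps * (L - rho) by apply: mulr_gt0 => //; lra.
set D1 := `|b| / eps.
set D2 := (2 * L * `|rho| + L * `|b|) / (eps * (L - rho)).
have hD1 : 0 <= D1 by apply: divr_ge0 => //; exact: ltW.
have hD2 : 0 <= D2.
  by apply: divr_ge0; [apply: addr_ge0; apply: mulr_ge0 => //; apply: mulr_ge0; lra | exact: ltW].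
set n := Num.Def.archi_bound (D1 + D2).
have hn : D1 + D2 < n%:R by apply: archi_boundP; lra.
have [alg [o [Ha [Ho [h1 [h2 h3]]]]]] := key R l A i0 hA hl n.
have := Hb _ (adv_valid R l A i0 hl n.+1).
rewrite Ha Ho -EFinM -EFinD lee_fin => h.
rewrite -/eps -/L in h1 h3.
set N := (n.+1)%:R : R in h1 h3.
have hN : n%:R < N by rewrite /N ltr_nat.
have hND1 : `|b| < N * eps.
  have -> : `|b| = D1 * eps by rewrite /D1 divfK // gt_eqF.
  rewrite ltr_pM2r //; lra.
have hND2 : 2 * L * `|rho| + L * `|b| < N * (eps * (L - rho)).
  have -> : 2 * L * `|rho| + L * `|b| = D2 * (eps * (L - rho)) by rewrite /D2 divfK // gt_eqF.
  rewrite ltr_pM2r //; lra.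
have hb : b <= `|b| by exact: ler_norm.
have hr : rho <= `|rho| by exact: ler_norm.
case: (lerP rho 0) => hrho.
  have : rho * o <= 0 by rewrite mulr_le0_ge0.
  lra.
have e1 : rho * (L * o) <= rho * (N * eps + 2 * L) by rewrite ler_pM2l.
have e2 : L * (N * eps) <= L * (rho * o + b) by rewrite ler_pM2l //; lra.
have e3 : L * `|b| >= L * b by rewrite ler_pM2l.
have e4 : 2 * L * `|rho| >= 2 * L * rho by rewrite ler_pM2l //; lra.
nra.
Qed.
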